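(* Let $G_{\mathrm{inv}}$ be the $q$-grammar with master variables $S=\{x,y\}$, rule $x_j\mapsto q^jy_jx_{j+1}$, $y_j\mapsto q^jy_jx_{j+1}$, and order AIO, with $q$-derivative $D$, and let $\phi$ be the evaluation $\phi(x_j)=x$, $\phi(y_j)=y$ for all $j$ (into the field of rational functions in commuting indeterminates $q,x,y$ over $\mathbb{K}$). Then for every $i\ge0$, as formal power series in $u$, \[ \phi\big(\mathrm{Gen}^{(G_{\mathrm{inv}})}_q(x_i^{-1};u)\big)=\frac{1-x^{-1}y\,e_q\big((x-y)uq^i\big)}{x-y},\qquad \phi\big(\mathrm{Gen}^{(G_{\mathrm{inv}})}_q(y_i^{-1};u)\big)=\frac{1-xy^{-1}\,E_q\big((y-x)uq^i\big)}{y-x}. \]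
   Context: Let $\mathbb{K}$ be a commutative ring with unity and characteristic zero, $q$ an indeterminate. For a set $S$ of master variables, $\mathbb{S}=\{s_i:s\in S,\ i\ge0\}$ is a set of non-commuting variables, $F(\mathbb{S})$ the free group on $\mathbb{S}$ and $\mathbb{E}=\mathbb{K}[q][F(\mathbb{S})]$ its group algebra. A rule $R$ assigns to each $s_i$ an element $R(s_i)\in\mathbb{E}$, extended by $R(s_i^{-1})=-s_i^{-1}R(s_i)s_{i+1}^{-1}$. The up-arrow $\uparrow$ is the linear map replacing each letter $s_i^{\pm1}$ by $s_{i+1}^{\pm1}$. An order rewrites each word by permuting its letters; AIO stably reorders letters according to the position of their underlying variable in $x_0,y_0,x_1,y_1,\dots$. The $q$-derivative of a $q$-grammar $(S,R,\rho)$ is the $\mathbb{K}[q]$-linear map with $D(w_1\cdots w_n)=\sum_{j=1}^n\rho\big(w_1\cdots w_{j-1}R(w_j)\uparrow(w_{j+1}\cdots w_n)\big)$ for letters $w_j\in\mathbb{S}\cup\mathbb{S}^{-1}$, $D^0=\mathrm{id}$, $D^k=D\circ D^{k-1}$. An evaluation extends to a $\mathbb{K}[q]$-linear ring morphism with $\phi(s_i^{-1})=\phi(s_i)^{-1}$. $\mathrm{Gen}^{(G)}_q(f;u)=\sum_{n\ge0}D^n(f)\,u^n/(q;q)_n$ with $(q;q)_n=\prod_{i=1}^n(1-q^i)$, and $\phi$ is applied coefficientwise. $e_q(u)=\sum_{n\ge0}u^n/(q;q)_n$, $E_q(u)=\sum_{n\ge0}q^{\binom n2}u^n/(q;q)_n$.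 *)

(* Defs.v *)
From HB Require Import structures.
From mathcomp Require Import all_boot all_order all_algebra.
Set Implicit Arguments. Unset Strict Implicit. Unset Printing Implicit Defensive.
Import Order.TTheory GRing.Theory Num.Theory.
Local Open Scope ring_scope.

Section QGrammar.
Variables (K : comRingType) (S : eqType).

(* A letter s_i^{+1} is (s, i, true); s_i^{-1} is (s, i, false). *)
Definition letter := (S * nat * bool)%type.
(* Words in the letters of SS ∪ SS^{-1}; elements of the free group F(SS)
   are represented by their (freely) reduced words. *)
Definition word := seq letter.
(* An element of E = K[q][F(SS)] is represented as a finite formal sum
   sum_k c_k w_k, given as the list of pairs (c_k, w_k), c_k in K[q]. *)
Definition elt := seq ({poly K} * word).

Definition inv_letter (a : letter) : letter := (a.1.1, a.1.2, ~~ a.2).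

Definition reduce (w : word) : word :=
  foldr (fun a r => if r is b :: r' then (if b == inv_letter a then r' else a :: r)
                    else [:: a]) [::] w.

Definition up_letter (a : letter) : letter := (a.1.1, a.1.2.+1, a.2).
Definition up (w : word) : word := map up_letter w.

Definition lmul (w : word) (e : elt) : elt := map (fun t => (t.1, reduce (w ++ t.2))) e.
Definition rmul (e : elt) (w : word) : elt := map (fun t => (t.1, reduce (t.2 ++ w))) e.
Definition scale (c : {poly K}) (e : elt) : elt := map (fun t => (c * t.1, t.2)) e.

Definition rule_ext (R : S -> nat -> elt) (a : letter) : elt :=
  let: (s, i, b) := a in
  if b then R s i
  else scale (-1) (rmul (lmul [:: (s, i, false)] (R s i)) [:: (s, i.+1, false)]).

(* sum_j  w_1...w_{j-1} R(w_j) up(w_{j+1}...w_n), with pre = w_1..w_{j-1}. *)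
Fixpoint dword (R : S -> nat -> elt) (pre : word) (w : word) : elt :=
  match w with
  | [::] => [::]
  | a :: w' => rmul (lmul pre (rule_ext R a)) (up w') ++ dword R (rcons pre a) w'
  end.

Definition qder (R : S -> nat -> elt) (rho : word -> word) (e : elt) : elt :=
  flatten [seq scale t.1 (map (fun u => (u.1, rho u.2)) (dword R [::] t.2)) | t <- e].

Definition qderN R rho (n : nat) (e : elt) : elt := iter n (qder R rho) e.

Section Eval.
Variables (F : fieldType) (inK : K -> F) (qF : F) (v : S -> nat -> F).
Definition eval_letter (a : letter) : F :=
  if a.2 then v a.1.1 a.1.2 else (v a.1.1 a.1.2)^-1.
Definition eval_word (w : word) : F := \prod_(a <- w) eval_letter a.
Definition eval (e : elt) : F :=
  \sum_(t <- e) (map_poly inK t.1).[qF] * eval_word t.2.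
End Eval.
End QGrammar.

Section FPS.
Variable F : fieldType.
Definition fps := nat -> F.
Definition fps_const (c : F) : fps := fun n => if n is 0 then c else 0.
Definition fps_sub (f g : fps) : fps := fun n => f n - g n.
Definition fps_scale (c : F) (f : fps) : fps := fun n => c * f n.

Definition qpoch (q : F) (n : nat) : F := \prod_(1 <= k < n.+1) (1 - q ^+ k).
Definition e_q (q c : F) : fps := fun n => c ^+ n / qpoch q n.
Definition E_q (q c : F) : fps := fun n => q ^+ 'C(n, 2) * c ^+ n / qpoch q n.
End FPS.

Definition Gen (K : comRingType) (S : eqType) (R : S -> nat -> elt K S)
  (rho : word S -> word S) (F : fieldType) (inK : K -> F) (qF : F)
  (v : S -> nat -> F) (f : elt K S) : fps F :=
  fun n => eval inK qF v (qderN R rho n f) / qpoch qF n.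

Inductive mvar := mx | my.
Definition mvar_eqb (a b : mvar) : bool :=
  match a, b with mx, mx | my, my => true | _, _ => false end.
Lemma mvar_eqP : Equality.axiom mvar_eqb.
Proof. by case; case; constructor. Qed.
HB.instance Definition _ := hasDecEq.Build mvar mvar_eqP.

Definition R_inv (K : comRingType) (s : mvar) (j : nat) : elt K mvar :=
  [:: ('X ^+ j, [:: (my, j, true); (mx, j.+1, true)])].

(* AIO: position of the underlying variable in x_0, y_0, x_1, y_1, ... *)
Definition aio_key (a : letter mvar) : nat := (a.1.2).*2 + (a.1.1 == my).
(* stable reordering (MathComp's sort is stable), then the group element *)
Definition rho_AIO (w : word mvar) : word mvar :=
  reduce (sort (fun a b => aio_key a <= aio_key b)%N w).

Definition RF (K : idomainType) := {fraction {poly {poly {poly K}}}}.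
Definition xRF (K : idomainType) : RF K := FracField.tofrac ('X : {poly {poly {poly K}}}).
Definition yRF (K : idomainType) : RF K := FracField.tofrac (('X)%:P : {poly {poly {poly K}}}).
Definition qRF (K : idomainType) : RF K := FracField.tofrac (('X)%:P%:P : {poly {poly {poly K}}}).
Definition KtoRF (K : idomainType) (k : K) : RF K := FracField.tofrac (k%:P%:P%:P).

Definition v_inv (K : idomainType) (s : mvar) (j : nat) : RF K :=
  if s is mx then xRF K else yRF K.

Definition Gen_inv (K : idomainType) (f : elt K mvar) : fps (RF K) :=
  Gen (@R_inv K) rho_AIO (@KtoRF K) (qRF K) (@v_inv K) f.

(* Main.v *)
Require Import Defs.
From HB Require Import structures.
From mathcomp Require Import all_boot all_order all_algebra.
From mathcomp Require Import ring lra zify.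
From Stdlib Require Import FunctionalExtensionality.
Import GRing.Theory.
Local Open Scope ring_scope.
Set Implicit Arguments. Unset Strict Implicit. Unset Printing Implicit Defensive.

Section Red.
Variable S : eqType.
Local Notation letter := (letter S).
Local Notation word := (word S).
Definition redf (a : letter) (r : word) : word :=
  if r is b :: r' then (if b == inv_letter a then r' else a :: r) else [:: a].
Lemma reduce_cons (a : letter) (w : word) : reduce (a :: w) = redf a (reduce w).
Proof. by []. Qed.
Definition nred (a b : letter) := b != @inv_letter S a.
Definition redw (w : word) := sorted nred w.
Lemma inv_letterK (a : letter) : inv_letter (inv_letter a) = a.
Proof. by case: a => [[s i] b]; rewrite /inv_letter /= negbK. Qed.
Lemma redw_tail (a : letter) (w : word) : redw (a :: w) -> redw w.
Proof. by case: w => //= b w /andP[]. Qed.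
Lemma redf_redw (a : letter) (r : word) : redw r -> redw (redf a r).
Proof.
case: r => [|b r] //= H. case: ifP => E; first exact: redw_tail H.
by rewrite /= H andbT /nred E.
Qed.
Lemma reduce_redw (w : word) : redw (reduce w).
Proof. elim: w => [|a w IH] //=; exact: redf_redw. Qed.
Lemma reduce_id (w : word) : redw w -> reduce w = w.
Proof.
elim: w => [|a w IH] //= H. rewrite IH ?(redw_tail H) //.
case: w H {IH} => [|b w] //= /andP[H _]. by rewrite /nred in H; rewrite (negbTE H).
Qed.
Lemma redf_inv (a : letter) (r : word) : redw r -> redf a (redf (inv_letter a) r) = r.
Proof.
case: r => [|b r] /=; first by rewrite eqxx.
rewrite inv_letterK. case: eqP => [->|_] /=; last by rewrite eqxx.
case: r => [|c r] //= /andP[H _]. by rewrite /nred in H; rewrite (negbTE H).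
Qed.
Lemma foldr_reduce (s r : word) : redw r -> foldr redf r (reduce s) = foldr redf r s.
Proof.
move=> Hr; elim: s => [|a s IH] //=. rewrite -IH.
have Hv := reduce_redw s. move: (reduce s) Hv => v Hv.
case: v Hv => [|b v] //= Hv. case: ifP => // /eqP ->.
rewrite redf_inv //. elim: v {Hv} => [|c v IHv] //=. exact: redf_redw.
Qed.
Lemma reduce_cat (s t : word) : reduce (s ++ t) = foldr redf (reduce t) s.
Proof. by rewrite /reduce foldr_cat. Qed.
Lemma reduce_catl (s t : word) : reduce (reduce s ++ t) = reduce (s ++ t).
Proof. by rewrite !reduce_cat foldr_reduce // reduce_redw. Qed.
Lemma reduce_catr (s t : word) : reduce (s ++ reduce t) = reduce (s ++ t).
Proof. by rewrite !reduce_cat reduce_id // reduce_redw. Qed.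
End Red.
Fixpoint Pz (K : idomainType) (s1 s2 : mvar) (k n : nat) : elt K mvar :=
  if n is n'.+1 then
    [seq (t.1, (s1, k, true) :: t.2) | t <- Pz K s1 s2 k.+1 n'] ++
    [seq (- t.1, (s2, k, true) :: t.2) | t <- Pz K s1 s2 k.+1 n']
  else [:: (1, [::])].

Lemma Pz_up (K : idomainType) s1 s2 n : forall k, [seq (t.1, up t.2) | t <- Pz K s1 s2 k n] = Pz K s1 s2 k.+1 n.
Proof.
elim: n => [|n IH] k //=. rewrite map_cat -!map_comp -!IH -!map_comp. by congr (_ ++ _).
Qed.
Section Words.
Local Notation word := (word mvar).
Local Notation letter := (letter mvar).
Definition Pw (k : nat) (w : word) := (map (fun a : letter => a.1.2) w == iota k (size w)) && all (fun a : letter => a.2) w.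
Lemma PwE k (a : letter) w : Pw k (a :: w) = [&& a.1.2 == k, a.2 & Pw k.+1 w].
Proof. by rewrite /Pw /= eqseq_cons; case: (_ == k); case: (a.2); rewrite /= ?andbF. Qed.
Lemma Pw_up w : forall k, Pw k w -> Pw k.+1 (up w).
Proof. elim: w => [|a w IH] k //. rewrite /= !PwE /= eqSS => /and3P[-> -> /IH ->]. by []. Qed.
Lemma Pw_cat w w' : forall k, Pw k w -> Pw (k + size w) w' -> Pw k (w ++ w').
Proof. elim: w => [|a w IH] k; first by rewrite addn0.
rewrite /= !PwE => /and3P[-> -> H] H' /=. apply: IH => //. by rewrite addSnnS. Qed.
Lemma Pw_path (a : letter) w : forall k, Pw k w -> (a.1.2 < k)%N -> path (fun a b : letter => a.1.2 < b.1.2)%N a w.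
Proof. elim: w a => [|b w IH] a k //. rewrite PwE /= => /and3P[/eqP Hb _ H] Ha.
rewrite Hb Ha /=. apply: IH H _. by rewrite Hb. Qed.
Lemma Pw_all w k : Pw k w -> all (fun a : letter => a.2) w.
Proof. by case/andP. Qed.
Definition leK (a b : letter) := (aio_key a <= aio_key b)%N.
Lemma idx_key (a b : letter) : (a.1.2 < b.1.2)%N -> leK a b.
Proof.
rewrite /leK /aio_key; move: (a.1.2) (b.1.2) => i j H.
case: (_ == my); case: (_ == my); rewrite /= -!muln2; lia.
Qed.
Lemma rho_good w : redw w -> sorted leK w -> rho_AIO w = w.
Proof.
move=> Hr Hs; rewrite /rho_AIO sorted_sort ?reduce_id //.
move=> b a c; exact: leq_trans.
Qed.
Lemma pos_path (a : letter) w : all (fun a : letter => a.2) w -> a.2 -> path (@nred _) a w.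
Proof.
elim: w a => [|b w IH] a //= /andP[Hb Hw] Ha. rewrite IH // andbT /nred.
apply/eqP => E; move: Hb; by rewrite E /inv_letter /= Ha.
Qed.
Lemma Pw_sorted k w : Pw k w -> sorted leK w && redw w.
Proof.
case: w => [|a w] // H. move: (H); rewrite PwE => /and3P[/eqP Ha Hp Hw].
rewrite /= /redw /=. rewrite pos_path ?(Pw_all Hw) // andbT.
apply: (sub_path idx_key (Pw_path Hw _)); by rewrite Ha.
Qed.
Lemma goodX i W : Pw i.+1 W -> redw [:: (mx, i, false), (my, i, true) & W] && sorted leK [:: (mx, i, false), (my, i, true) & W].
Proof.
move=> H. rewrite /redw /= pos_path ?(Pw_all H) //.
rewrite {1}/leK /aio_key /= addn0 addn1 leqnSn /=.
exact: (sub_path idx_key (Pw_path H _)).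
Qed.
Lemma good_rcons k V (c d : letter) : Pw k V -> (0 < size V)%N -> leK (last d V) c -> nred (last d V) c ->
  redw (rcons V c) && sorted leK (rcons V c).
Proof.
case: V => [|a V] // H _ /=. move: (H); rewrite PwE => /and3P[/eqP Ha Hp Hw] H1 H2.
rewrite /redw /= !rcons_path H1 H2 !andbT pos_path ?(Pw_all Hw) //=.
apply: (sub_path idx_key (Pw_path Hw _)); by rewrite Ha.
Qed.
End Words.
Lemma Pz_Pw (K : idomainType) s1 s2 n : forall k (t : {poly K} * word mvar), t \in Pz K s1 s2 k n -> Pw k t.2 && (size t.2 == n).
Proof.
elim: n => [|n IH] k t /=; first by rewrite inE => /eqP -> .
rewrite mem_cat => /orP[] /mapP[[c w] /IH /andP[H1 /eqP H2] ->] /=;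
by rewrite PwE eqxx H1 H2 eqxx.
Qed.
Lemma up_cons (a : letter mvar) w : up (a :: w) = up_letter a :: up w. Proof. by []. Qed.
Arguments reduce : simpl never.
Arguments up : simpl never.

Section Gen.
Variables (K : idomainType) (F : fieldType) (inK : {rmorphism K -> F}) (q x y : F).
Local Notation word := (word mvar).
Local Notation elt := (elt K mvar).
Local Notation RR := (@R_inv K).
Local Notation Pz := (Pz K).
Definition vF (s : mvar) (j : nat) : F := if s is mx then x else y.

Definition ev (c : {poly K}) : F := (map_poly inK c).[q].
Lemma evM a b : ev (a * b) = ev a * ev b.
Proof. by rewrite /ev rmorphM hornerM. Qed.
Lemma evN a : ev (- a) = - ev a.
Proof. by rewrite /ev rmorphN hornerN. Qed.
Lemma ev1 : ev 1 = 1.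
Proof. by rewrite /ev rmorph1 hornerC. Qed.
Lemma evXn j : ev ('X^j) = q ^+ j.
Proof. by rewrite /ev map_polyXn hornerXn. Qed.
Lemma evNXn j : ev (-1 * 'X^j) = - q ^+ j.
Proof. by rewrite evM evN ev1 evXn mulN1r. Qed.

Definition Phi m (e : elt) : F := eval inK q vF (qderN RR rho_AIO m e).
Definition phi1 m (w : word) := Phi m [:: (1, w)].

Lemma qder_cat (e1 e2 : elt) : qder RR rho_AIO (e1 ++ e2) = qder RR rho_AIO e1 ++ qder RR rho_AIO e2.
Proof. by rewrite /qder map_cat flatten_cat. Qed.
Lemma qder_scale c (e : elt) : qder RR rho_AIO (scale c e) = scale c (qder RR rho_AIO e).
Proof.
rewrite /qder /scale map_flatten -!map_comp; congr flatten.
apply: eq_map => t /=; rewrite -!map_comp; apply: eq_map => u /=; by rewrite mulrA.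
Qed.
Lemma qderN_cat m (e1 e2 : elt) : qderN RR rho_AIO m (e1 ++ e2) = qderN RR rho_AIO m e1 ++ qderN RR rho_AIO m e2.
Proof. by elim: m => [|m IH] //=; rewrite /qderN /= -/(qderN _ _ _ _) IH qder_cat. Qed.
Lemma qderN_scale m c (e : elt) : qderN RR rho_AIO m (scale c e) = scale c (qderN RR rho_AIO m e).
Proof. by elim: m => [|m IH] //=; rewrite /qderN /= -/(qderN _ _ _ _) IH qder_scale. Qed.
Lemma eval_cat (e1 e2 : elt) : eval inK q vF (e1 ++ e2) = eval inK q vF e1 + eval inK q vF e2.
Proof. by rewrite /eval big_cat. Qed.
Lemma eval_scale c (e : elt) : eval inK q vF (scale c e) = ev c * eval inK q vF e.
Proof.
rewrite /eval /scale big_map big_distrr; apply: eq_bigr => t _ /=.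
by rewrite -/(ev _) evM mulrA.
Qed.
Lemma Phi_lin m (e : elt) : Phi m e = \sum_(t <- e) ev t.1 * phi1 m t.2.
Proof.
have N0 : qderN RR rho_AIO m [::] = [::] by elim: m => [|m IHm] //=; rewrite IHm.
elim: e => [|[c w] e IH]; first by rewrite big_nil /Phi N0 /eval big_nil.
rewrite big_cons -IH /phi1 /Phi -cat1s qderN_cat eval_cat; congr (_ + _).
have -> : [:: (c, w)] = scale c [:: (1, w)] by rewrite /scale /= mulr1.
by rewrite qderN_scale eval_scale.
Qed.
Definition Dsum m (h : word -> word) (p w : word) : F :=
  \sum_(u <- dword RR p w) ev u.1 * phi1 m (h u.2).
Lemma phi1S m w : phi1 m.+1 w = Dsum m rho_AIO [::] w.
Proof.
rewrite /phi1 /Phi /qderN iterSr -/(qderN _ _ _ _) -/(Phi _ _) Phi_lin.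
rewrite /qder /= cats0 /scale -!map_comp big_map /Dsum; apply: eq_bigr => u _ /=.
by rewrite mul1r.
Qed.
Lemma phi10 w : phi1 0 w = eval_word vF w.
Proof. by rewrite /phi1 /Phi /eval /= big_seq1 -/(ev _) ev1 mul1r. Qed.
Lemma Dsum_cons m h p a w : Dsum m h p (a :: w) =
  \sum_(u <- rmul (lmul p (rule_ext RR a)) (up w)) ev u.1 * phi1 m (h u.2) + Dsum m h (rcons p a) w.
Proof. by rewrite /Dsum /= big_cat. Qed.

Lemma ClaimZ s1 s2 m n : forall k p h,
  \sum_(t <- Pz s1 s2 k n) ev t.1 * Dsum m h p t.2 = 0.
Proof.
elim: n => [|n IH] k p h /=; first by rewrite big_seq1 /Dsum big_nil mulr0.
rewrite big_cat !big_map /=.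
under eq_bigr => t _ do rewrite Dsum_cons /=.
under [X in _ + X]eq_bigr => t _ do rewrite Dsum_cons /= evN.
rewrite -big_split /=.
transitivity (\sum_(t <- Pz s1 s2 k.+1 n) ev t.1 * Dsum m h (rcons p (s1, k, true)) t.2
   - \sum_(t <- Pz s1 s2 k.+1 n) ev t.1 * Dsum m h (rcons p (s2, k, true)) t.2); last by rewrite !IH subrr.
rewrite -sumrB; apply: eq_bigr => t _. rewrite /R_inv. ring.
Qed.

Lemma sumPz_rcons s1 s2 n : forall k (f : word -> F),
  \sum_(t <- Pz s1 s2 k n.+1) ev t.1 * f t.2 =
  \sum_(t <- Pz s1 s2 k n) ev t.1 * (f (rcons t.2 (s1, (k + n)%N, true)) - f (rcons t.2 (s2, (k + n)%N, true))).
Proof.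
elim: n => [|n IH] k f.
  by rewrite /= !big_cons !big_nil /= evN ev1 addn0; ring.
rewrite [Pz _ _ _ n.+2]/= big_cat !big_map /=.
under [X in _ + X]eq_bigr => t _ do rewrite evN mulNr.
rewrite sumrN.
rewrite (IH k.+1 (fun w => f ((s1, k, true) :: w))) (IH k.+1 (fun w => f ((s2, k, true) :: w))).
rewrite big_cat !big_map /= addSnnS.
under [X in _ = _ + X]eq_bigr => t _ do rewrite evN mulNr.
by rewrite sumrN.
Qed.

Lemma ew_cons a w : eval_word vF (a :: w) = eval_letter vF a * eval_word vF w.
Proof. by rewrite /eval_word big_cons. Qed.
Lemma ew_cat w1 w2 : eval_word vF (w1 ++ w2) = eval_word vF w1 * eval_word vF w2.
Proof. by rewrite /eval_word big_cat. Qed.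
Lemma el_xn j : eval_letter vF (mx, j, false) = x^-1. Proof. by []. Qed.
Lemma el_yn j : eval_letter vF (my, j, false) = y^-1. Proof. by []. Qed.
Lemma el_xp j : eval_letter vF (mx, j, true) = x. Proof. by []. Qed.
Lemma el_yp j : eval_letter vF (my, j, true) = y. Proof. by []. Qed.

Lemma sumPz_eval s1 s2 n : forall k,
  \sum_(t <- Pz s1 s2 k n) ev t.1 * eval_word vF t.2 = (vF s1 0 - vF s2 0) ^+ n.
Proof.
elim: n => [|n IH] k /=; first by rewrite big_seq1 ev1 mul1r /eval_word big_nil.
rewrite big_cat !big_map /= exprS -(IH k.+1) mulrBl !big_distrr /=.
under [X in _ + X]eq_bigr => t _ do rewrite evN mulNr.
rewrite sumrN.
have E : forall s j, vF s j = vF s 0 by case.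
congr (_ - _); apply: eq_bigr => t _; rewrite ew_cons /eval_letter /= E; ring.
Qed.
Lemma stepX m i w : Pw i.+1 w ->
  phi1 m.+1 [:: (mx, i, false), (my, i, true) & w] =
  - q ^+ i * phi1 m [:: (mx, i, false), (my, i, true), (my, i.+1, true) & up w]
  + q ^+ i * phi1 m [:: (mx, i, false), (my, i, true), (mx, i.+1, true) & up w]
  + Dsum m rho_AIO [:: (mx, i, false); (my, i, true)] w.
Proof.
move=> H. rewrite phi1S !Dsum_cons /= !big_cons !big_nil /= !addr0.
have red4 : reduce [:: (mx, i, false); (my, i, true); (mx, i.+1, true); (mx, i.+1, false)] = [:: (mx, i, false); (my, i, true)].
  by rewrite /reduce /= /inv_letter /= !xpair_eqE /= ?eqxx.
rewrite red4 reduce_catl up_cons /=.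
have G : forall s, Pw i.+1 [:: (s, i.+1, true) & up w].
  by move=> s; rewrite PwE eqxx Pw_up.
have R : forall s, rho_AIO (reduce [:: (mx, i, false), (my, i, true), (s, i.+1, true) & up w]) = [:: (mx, i, false), (my, i, true), (s, i.+1, true) & up w].
  move=> s; case/andP: (goodX (G s)) => H1 H2; by rewrite reduce_id // rho_good.
rewrite !R evNXn evXn; ring.
Qed.
Lemma ClaimX i m : forall n,
  \sum_(t <- Pz mx my i.+1 n) ev t.1 * phi1 m [:: (mx, i, false), (my, i, true) & t.2]
  = q ^+ (i * m) * (x^-1 * y) * (x - y) ^+ (n + m).
Proof.
elim: m => [|m IH] n.
  under eq_bigr => t _ do rewrite phi10 !ew_cons el_xn el_yp.
  rewrite muln0 addn0 -(sumPz_eval mx my n i.+1) expr0 mul1r big_distrr /=.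
  apply: eq_bigr => t _; ring.
rewrite (eq_big_seq (fun t => ev t.1 * (- q ^+ i * phi1 m [:: (mx, i, false), (my, i, true), (my, i.+1, true) & up t.2]
  + q ^+ i * phi1 m [:: (mx, i, false), (my, i, true), (mx, i.+1, true) & up t.2]
  + Dsum m rho_AIO [:: (mx, i, false); (my, i, true)] t.2))); last first.
  by move=> t /Pz_Pw /andP[H _]; rewrite stepX.
under eq_bigr => t _ do rewrite mulrDr.
rewrite big_split /= ClaimZ addr0.
have E := IH n.+1.
rewrite /= big_cat !big_map /= -(Pz_up K mx my n i.+1) !big_map /= in E.
have E2 : forall f : word -> F, \sum_(t <- Pz mx my i.+1 n) ev (- t.1) * f t.2 = - \sum_(t <- Pz mx my i.+1 n) ev t.1 * f t.2.
  by move=> f; rewrite -sumrN; apply: eq_bigr => t _; rewrite evN mulNr.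
rewrite (E2 (fun w => phi1 m [:: (mx, i, false), (my, i, true), (my, i.+1, true) & up w])) in E.
transitivity (q ^+ i * (\sum_(t <- Pz mx my i.+1 n) ev t.1 * phi1 m [:: (mx, i, false), (my, i, true), (mx, i.+1, true) & up t.2] -
      \sum_(t <- Pz mx my i.+1 n) ev t.1 * phi1 m [:: (mx, i, false), (my, i, true), (my, i.+1, true) & up t.2])).
  rewrite mulrBr !mulr_sumr -sumrB; apply: eq_bigr => t _; ring.
by rewrite E addSnnS mulnS [q ^+ (i + _)]exprD !mulrA.
Qed.
Lemma up_cat (u w : word) : up (u ++ w) = up u ++ up w.
Proof. by rewrite /up map_cat. Qed.
Lemma rmul_cat (e1 e2 : elt) s : rmul (e1 ++ e2) s = rmul e1 s ++ rmul e2 s.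
Proof. by rewrite /rmul map_cat. Qed.
Lemma rmul_rmul (e : elt) s t : rmul (rmul e s) t = rmul e (s ++ t).
Proof. rewrite /rmul -map_comp; apply: eq_map => u /=; by rewrite reduce_catl catA. Qed.
Lemma dword_cat u : forall p w, dword RR p (u ++ w) = rmul (dword RR p u) (up w) ++ dword RR (p ++ u) w.
Proof.
elim: u => [|a u IH] p w; first by rewrite cats0.
rewrite cat_cons [dword _ _ (a :: _)]/= IH [dword _ _ (a :: u)]/= up_cat rmul_cat rmul_rmul catA.
by rewrite cat_rcons.
Qed.

Lemma goodY k w j z : Pw k w -> j = (k + size w)%N ->
  rho_AIO (reduce (w ++ [:: (z, j, true); (mx, j.+1, true); (my, j.+1, false)])) =
  w ++ [:: (z, j, true); (mx, j.+1, true); (my, j.+1, false)].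
Proof.
move=> H Hj.
have -> : w ++ [:: (z, j, true); (mx, j.+1, true); (my, j.+1, false)] =
  rcons (w ++ [:: (z, j, true); (mx, j.+1, true)]) (my, j.+1, false) by rewrite -cats1 -catA.
have HP : Pw k (w ++ [:: (z, j, true); (mx, j.+1, true)]).
  by apply: Pw_cat => //; rewrite -Hj !PwE !eqxx.
have [H1 H2] : redw (rcons (w ++ [:: (z, j, true); (mx, j.+1, true)]) (my, j.+1, false)) /\
   sorted leK (rcons (w ++ [:: (z, j, true); (mx, j.+1, true)]) (my, j.+1, false)).
  apply/andP; apply: (good_rcons (d := (mx, 0%N, true)) HP); rewrite ?size_cat ?addn2 // last_cat /=.
    by rewrite /leK /aio_key /= addn0 addn1.
  by rewrite /nred /inv_letter /= ?xpair_eqE.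
by rewrite reduce_id // rho_good.
Qed.

Lemma stepY m k w : Pw k w ->
  phi1 m.+1 (w ++ [:: (mx, (k + size w)%N, true); (my, (k + size w)%N, false)]) =
  Dsum m (fun v => rho_AIO (reduce (v ++ up [:: (mx, (k + size w)%N, true); (my, (k + size w)%N, false)]))) [::] w
  + q ^+ (k + size w) * phi1 m (w ++ [:: (my, (k + size w)%N, true); (mx, (k + size w).+1, true); (my, (k + size w).+1, false)])
  - q ^+ (k + size w) * phi1 m (w ++ [:: (mx, (k + size w)%N, true); (mx, (k + size w).+1, true); (my, (k + size w).+1, false)]).
Proof.
move=> H. set j := (k + size w)%N.
rewrite phi1S /Dsum dword_cat big_cat /rmul big_map /=.
rewrite -addrA; congr (_ + _).
rewrite big_cons big_cons big_nil addr0 /=.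
have R1 : reduce [:: (my, j, false); (my, j, true); (mx, j.+1, true); (my, j.+1, false)] = [:: (mx, j.+1, true); (my, j.+1, false)].
  by rewrite /reduce /= /inv_letter /= ?xpair_eqE /= ?eqxx.
have U1 : up [:: (my, j, false)] = [:: (my, j.+1, false)] by [].
have U0 : up [::] = [::] :> word by [].
rewrite U1 U0 [reduce (reduce [:: (my, j, false); _; _] ++ _)]reduce_catl /= R1 !reduce_catl cats0 -catA cat_rcons /=.
rewrite !(goodY _ H) // evXn evNXn; ring.
Qed.
Lemma ew_nil : eval_word vF [::] = 1. Proof. by rewrite /eval_word big_nil. Qed.
Lemma ClaimY m : forall n k,
  \sum_(t <- Pz my mx k n) ev t.1 * phi1 m (t.2 ++ [:: (mx, (k + n)%N, true); (my, (k + n)%N, false)])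
  = q ^+ (m * (k + n) + 'C(m, 2)) * (x * y^-1) * (y - x) ^+ (n + m).
Proof.
elim: m => [|m IH] n k.
  under eq_bigr => t _ do rewrite phi10 ew_cat !ew_cons el_xp el_yn ew_nil.
  have S := sumPz_eval my mx n k.
  rewrite mul0n bin0n addn0 expr0 mul1r.
  transitivity (x / y * \sum_(t <- Pz my mx k n) ev t.1 * eval_word vF t.2); last by rewrite S.
  rewrite mulr_sumr; apply: eq_bigr => t _; ring.
rewrite (eq_big_seq (fun t => ev t.1 * (
  Dsum m (fun v => rho_AIO (reduce (v ++ up [:: (mx, (k + n)%N, true); (my, (k + n)%N, false)]))) [::] t.2
  + q ^+ (k + n) * phi1 m (t.2 ++ [:: (my, (k + n)%N, true); (mx, (k + n).+1, true); (my, (k + n).+1, false)])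
  - q ^+ (k + n) * phi1 m (t.2 ++ [:: (mx, (k + n)%N, true); (mx, (k + n).+1, true); (my, (k + n).+1, false)])))); last first.
  move=> t /Pz_Pw /andP[H /eqP Hs]; have := stepY m H; rewrite Hs => ->; done.
under eq_bigr => t _ do rewrite -addrA mulrDr.
rewrite big_split /= ClaimZ add0r.
have E := IH n.+1 k.
rewrite (sumPz_rcons my mx n k (fun w => phi1 m (w ++ [:: (mx, (k + n.+1)%N, true); (my, (k + n.+1)%N, false)]))) in E.
transitivity (q ^+ (k + n) * \sum_(t <- Pz my mx k n) ev t.1 *
   (phi1 m (rcons t.2 (my, (k + n)%N, true) ++ [:: (mx, (k + n.+1)%N, true); (my, (k + n.+1)%N, false)]) -
    phi1 m (rcons t.2 (mx, (k + n)%N, true) ++ [:: (mx, (k + n.+1)%N, true); (my, (k + n.+1)%N, false)]))).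
  rewrite mulr_sumr; apply: eq_bigr => t _; rewrite !cat_rcons addnS /=; ring.
rewrite E addSnnS.
have -> : (m.+1 * (k + n) + 'C(m.+1, 2) = (k + n) + (m * (k + n.+1) + 'C(m, 2)))%N by rewrite binS bin1; nia.
by rewrite [q ^+ (k + n + _)]exprD !mulrA.
Qed.

Lemma topX i n : phi1 n [:: (mx, i, false)] =
  if n is m.+1 then - q ^+ (i * n) * (x^-1 * y) * (x - y) ^+ m else x^-1.
Proof.
case: n => [|m].
  by rewrite phi10 ew_cons el_xn /eval_word big_nil mulr1.
rewrite phi1S Dsum_cons /Dsum /= big_cons !big_nil /= !addr0.
have R : reduce [:: (mx, i, false); (my, i, true); (mx, i.+1, true); (mx, i.+1, false)] = [:: (mx, i, false); (my, i, true)].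
  by rewrite /reduce /= /inv_letter /= !xpair_eqE /= ?eqxx.
have U0 : up [::] = [::] :> word by [].
rewrite reduce_catl /= R U0 cats0.
have G : rho_AIO (reduce [:: (mx, i, false); (my, i, true)]) = [:: (mx, i, false); (my, i, true)].
  have := goodX (W := [::]) (i := i) isT; case/andP => H1 H2; by rewrite reduce_id // rho_good.
have E := ClaimX i m 0.
rewrite /= big_seq1 ev1 mul1r add0n /= in E.
rewrite G E evNXn mulnS [q ^+ (i + _)]exprD; ring.
Qed.

Lemma topY i n : phi1 n [:: (my, i, false)] =
  if n is m.+1 then - q ^+ (i * n + 'C(n, 2)) * (x * y^-1) * (y - x) ^+ m else y^-1.
Proof.
case: n => [|m].
  by rewrite phi10 ew_cons el_yn /eval_word big_nil mulr1.
rewrite phi1S Dsum_cons /Dsum /= big_cons !big_nil /= !addr0.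
have R : reduce [:: (my, i, false); (my, i, true); (mx, i.+1, true); (my, i.+1, false)] = [:: (mx, i.+1, true); (my, i.+1, false)].
  by rewrite /reduce /= /inv_letter /= ?xpair_eqE /= ?eqxx.
have U0 : up [::] = [::] :> word by [].
rewrite U0 cats0 [reduce (reduce [:: (my, i, false); _; _] ++ _)]reduce_catl /= R.
have Hr : redw [:: (mx, i.+1, true); (my, i.+1, false)].
  by rewrite /redw /= /nred /inv_letter /= ?xpair_eqE.
have Hs : sorted leK [:: (mx, i.+1, true); (my, i.+1, false)].
  by rewrite /= /leK /aio_key /= addn0 andbT leq_addr.
rewrite !(reduce_id Hr) (rho_good Hr Hs).
have E := ClaimY m 0 i.+1.
rewrite /= big_seq1 ev1 mul1r !addn0 add0n /= in E.
rewrite E evNXn.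
have -> : (i * m.+1 + 'C(m.+1, 2) = i + (m * i.+1 + 'C(m, 2)))%N by rewrite binS bin1; nia.
rewrite [q ^+ (i + _)]exprD; ring.
Qed.
Lemma GenX_abs (hx : x != 0) (hxy : x - y != 0) i n :
  phi1 n [:: (mx, i, false)] / qpoch q n =
  fps_scale (x - y)^-1 (fps_sub (fps_const 1) (fps_scale (x^-1 * y) (e_q q ((x - y) * q ^+ i)))) n.
Proof.
rewrite topX /fps_scale /fps_sub /fps_const /e_q.
case: n => [|m].
  rewrite /qpoch big_geq // expr0 invr1 !mulr1. field. by rewrite hxy hx.
rewrite exprMn -exprM mulnC.
set Pi := (qpoch q m.+1)^-1. rewrite exprS. field. by rewrite hxy hx.
Qed.
Lemma GenY_abs (hy : y != 0) (hxy : y - x != 0) i n :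
  phi1 n [:: (my, i, false)] / qpoch q n =
  fps_scale (y - x)^-1 (fps_sub (fps_const 1) (fps_scale (x * y^-1) (E_q q ((y - x) * q ^+ i)))) n.
Proof.
rewrite topY /fps_scale /fps_sub /fps_const /E_q.
case: n => [|m].
  rewrite /qpoch big_geq // bin0n !expr0 invr1 !mulr1. field. by rewrite hxy hy.
rewrite exprMn -exprM mulnC exprD.
set Pi := (qpoch q m.+1)^-1. rewrite exprS. field. by rewrite hxy hy.
Qed.
End Gen.

Section Inst.
Variable K : idomainType.
Lemma KtoRF_zmod : zmod_morphism (@KtoRF K).
Proof. by move=> a b; rewrite /KtoRF !polyCB rmorphB. Qed.
HB.instance Definition _ := GRing.isZmodMorphism.Build K (RF K) (@KtoRF K) KtoRF_zmod.
Lemma KtoRF_mon : monoid_morphism (@KtoRF K).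
Proof. split => [|a b]; rewrite /KtoRF; first by rewrite polyC1 tofrac1.
by rewrite !polyCM tofracM. Qed.
HB.instance Definition _ := GRing.isMonoidMorphism.Build K (RF K) (@KtoRF K) KtoRF_mon.
Definition KtoRF_rm : {rmorphism K -> RF K} := @KtoRF K.
Lemma xRF_neq0 : xRF K != 0.
Proof. by rewrite /xRF tofrac_eq0 polyX_eq0. Qed.
Lemma yRF_neq0 : yRF K != 0.
Proof. by rewrite /yRF tofrac_eq0 polyC_eq0 polyX_eq0. Qed.
Lemma xyRF_neq0 : xRF K - yRF K != 0.
Proof. by rewrite /xRF /yRF -tofracB tofrac_eq0 polyXsubC_eq0. Qed.
Lemma yxRF_neq0 : yRF K - xRF K != 0.
Proof. by rewrite -opprB oppr_eq0 xyRF_neq0. Qed.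
End Inst.

Unset Implicit Arguments.
Theorem corollary5p6 (K : idomainType) (charK : [pchar K] =i pred0) (i : nat) :
  let x := xRF K in let y := yRF K in let q := qRF K in
  Gen_inv [:: (1, [:: (mx, i, false)])]
    = fps_scale (x - y)^-1
        (fps_sub (fps_const 1) (fps_scale (x^-1 * y) (e_q q ((x - y) * q ^+ i))))
  /\
  Gen_inv [:: (1, [:: (my, i, false)])]
    = fps_scale (y - x)^-1
        (fps_sub (fps_const 1) (fps_scale (x * y^-1) (E_q q ((y - x) * q ^+ i)))).
Proof.
move=> x y q; split; apply: functional_extensionality => n.
  exact: (GenX_abs (KtoRF_rm K) (qRF K) (xRF_neq0 K) (xyRF_neq0 K) i n).
exact: (GenY_abs (KtoRF_rm K) (qRF K) (yRF_neq0 K) (yxRF_neq0 K) i n).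
Qed.
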